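(* Each of the matroids $U_{2,4}\oplus U_{1,1}$, $U_{2,4}\oplus U_{0,1}$ and $R_6$ is an excluded minor for $\mathcal{Z}$ and is also an excluded minor for $\mathcal{R}$.
   Context: $\mathcal{Z}$ is the class of matroids $M$ such that for every $e\in E(M)$, $M\backslash e$ or $M/e$ is binary. $\mathcal{R}$ is the class of matroids that are binary or can be obtained from a binary matroid by relaxing a circuit-hyperplane (relaxing a circuit-hyperplane $H$ of $M$ means forming the matroid on $E(M)$ whose bases are the bases of $M$ together with $H$). An excluded minor for a minor-closed class is a matroid not in the class all of whose proper minors are in the class. $R_6$ is the six-element rank-3 matroid whose non-spanning circuits are exactly two disjoint triangles, i.e. $R_6\cong U_{2,4}\oplus_2U_{2,4}$. *)

(* Defs.v *)
From HB Require Import structures.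
From mathcomp Require Import all_boot all_order all_algebra.
Set Implicit Arguments. Unset Strict Implicit. Unset Printing Implicit Defensive.
Import GRing.Theory.

Record matroid (T : finType) := Matroid { ground : {set T}; bases : {set {set T}} }.

Section Matroids.
Variable T : finType.
Implicit Types (M N : matroid T) (X Y C D H : {set T}).

Definition is_matroid M : Prop :=
  [/\ bases M != set0,
      forall B, B \in bases M -> B \subset ground M &
      forall B1 B2, B1 \in bases M -> B2 \in bases M ->
        forall x, x \in B1 :\: B2 ->
          exists2 y, y \in B2 :\: B1 & (y |: (B1 :\ x)) \in bases M].

Definition rank M X : nat := \max_(B in bases M) #|X :&: B|.

Definition indep M X : bool := [exists B in bases M, X \subset B].

Definition circuit M X : bool :=
  [&& X \subset ground M, ~~ indep M X & [forall x in X, indep M (X :\ x)]].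

Definition flat M X : bool :=
  (X \subset ground M) &&
  [forall e in ground M :\: X, rank M X < rank M (e |: X)].

Definition hyperplane M X : bool :=
  flat M X && ((rank M X).+1 == rank M (ground M)).

Definition circuit_hyperplane M H : bool := circuit M H && hyperplane M H.

Definition relax M H : matroid T := Matroid (ground M) (H |: bases M).

Definition minor M C D : matroid T :=
  let E' := ground M :\: (C :|: D) in
  let r' := fun X => rank M (X :|: C) - rank M C in
  Matroid E' [set X : {set T} | [&& X \subset E', r' X == #|X| & #|X| == r' E']].

Definition deletion M e := minor M set0 [set e].
Definition contraction M e := minor M [set e] set0.

(* M is binary: represented over GF(2) by vectors f e, e in E:
   the bases are exactly the subsets whose vectors form a basis of the span of f(E). *)
Definition binary M : Prop :=
  exists (n : nat) (f : T -> 'rV['F_2]_n),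
    forall X, X \in bases M <->
      [/\ X \subset ground M, free [seq f x | x <- enum X] &
          (<< [seq f x | x <- enum (ground M)] >> <= << [seq f x | x <- enum X] >>)%VS].

Definition classZ M : Prop :=
  forall e, e \in ground M -> binary (deletion M e) \/ binary (contraction M e).

Definition classR M : Prop :=
  binary M \/
  exists N H, [/\ is_matroid N, binary N, circuit_hyperplane N H & M = relax N H].

Definition excluded_minor (P : matroid T -> Prop) M : Prop :=
  [/\ is_matroid M, ~ P M &
      forall C D, C \subset ground M -> D \subset ground M -> [disjoint C & D] ->
        C :|: D != set0 -> P (minor M C D)].

End Matroids.

(* U_{2,4} ⊕ U_{1,1} on {0,..,4}: 4 is a coloop *)
Definition U24_U11 : matroid ('I_5) :=
  Matroid [set: 'I_5] [set B : {set 'I_5} | (#|B| == 3) && (ord_max \in B)].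

(* U_{2,4} ⊕ U_{0,1} on {0,..,4}: 4 is a loop *)
Definition U24_U01 : matroid ('I_5) :=
  Matroid [set: 'I_5] [set B : {set 'I_5} | (#|B| == 2) && (ord_max \notin B)].

(* R_6 on {0,..,5}: rank 3, non-spanning circuits exactly {0,1,2} and {3,4,5} *)
Definition tri1 : {set 'I_6} := [set i : 'I_6 | i < 3].
Definition tri2 : {set 'I_6} := [set i : 'I_6 | 3 <= i].
Definition R6 : matroid ('I_6) :=
  Matroid [set: 'I_6] [set B : {set 'I_6} | [&& #|B| == 3, B != tri1 & B != tri2]].

(* Main.v *)
Require Import Defs.
From HB Require Import structures.
From mathcomp Require Import all_boot all_order all_algebra.
From Stdlib Require Import FunctionalExtensionality.
Set Implicit Arguments. Unset Strict Implicit. Unset Printing Implicit Defensive.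

Fixpoint map2b (f : bool -> bool -> bool) (x y : seq bool) : seq bool :=
  match x, y with a :: x', b :: y' => f a b :: map2b f x' y' | _, _ => [::] end.

Lemma nth_map2b f x y i : f false false = false -> size x = size y ->
  nth false (map2b f x y) i = f (nth false x i) (nth false y i).
Proof.
move=> f0; elim: x y i => [|a x IH] [|b y] i //=; try by rewrite !nth_nil.
by move=> [] h; case: i => [|i] //=; apply: IH.
Qed.

Lemma size_map2b f x y : size x = size y -> size (map2b f x y) = size x.
Proof. by elim: x y => [|a x IH] [|b y] //= [] /IH ->. Qed.

Fixpoint bx (u v : seq bool) : seq bool :=
  match u, v with
  | [::], _ => v
  | _, [::] => u
  | a :: u', b :: v' => addb a b :: bx u' v'
  end.

Lemma nth_bx u v j : nth false (bx u v) j = addb (nth false u j) (nth false v j).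
Proof.
elim: u v j => [|a u IH] [|b v] j //=; try by rewrite !nth_nil ?addbF.
by case: j => [|j] //=; rewrite IH.
Qed.

Lemma size_bx u v : size (bx u v) = maxn (size u) (size v).
Proof.
elim: u v => [|a u IH] [|b v] //=; try by rewrite ?max0n ?maxn0.
by rewrite IH maxnSS.
Qed.

Fixpoint allb m : seq (seq bool) :=
  if m is m'.+1 then let r := allb m' in map (cons false) r ++ map (cons true) r
  else [:: [::]].

Arguments allb : simpl never.

Lemma allbP m s : (s \in allb m) = (size s == m).
Proof.
have ci : forall c : bool, injective (cons c) by move=> c u v [].
elim: m s => [|m IH] [|a s] //; rewrite /= mem_cat.
  by apply/negbTE; rewrite negb_or; apply/andP; split; apply/mapP => -[].
rewrite eqSS -IH; case: a.
  have -> : (true :: s \in map (cons false) (allb m)) = false.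
    by apply/negbTE/mapP => -[t _ []].
  by rewrite mem_map.
have -> : (false :: s \in map (cons true) (allb m)) = false.
  by apply/negbTE/mapP => -[t _ []].
by rewrite mem_map // orbF.
Qed.

Lemma leq_foldr_max (S : eqType) (F : S -> nat) s x :
  x \in s -> F x <= foldr maxn 0 (map F s).
Proof.
elim: s => //= y s IH; rewrite in_cons => /orP[/eqP->|/IH h].
  by rewrite leq_max leqnn.
by rewrite leq_max h orbT.
Qed.

Lemma foldr_max_leq (S : eqType) (F : S -> nat) s m :
  {in s, forall x, F x <= m} -> foldr maxn 0 (map F s) <= m.
Proof.
elim: s => //= y s IH H; rewrite geq_max H ?inE ?eqxx //.
by apply: IH => x hx; apply: H; rewrite inE hx orbT.
Qed.


Fixpoint hasl (T : Type) (a : T -> bool) (s : seq T) : bool :=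
  if s is x :: s' then (if a x then true else hasl a s') else false.
Fixpoint alll (T : Type) (a : T -> bool) (s : seq T) : bool :=
  if s is x :: s' then (if a x then alll a s' else false) else true.
Lemma haslE (T : Type) : @hasl T = @has T.
Proof.
apply: functional_extensionality => a; apply: functional_extensionality => s.
by elim: s => //= x s ->.
Qed.
Lemma alllE (T : Type) : @alll T = @all T.
Proof.
apply: functional_extensionality => a; apply: functional_extensionality => s.
by elim: s => //= x s ->.
Qed.

Section RowV.
Import GRing.Theory.
Local Open Scope ring_scope.

Lemma F2cases (a : 'F_2) : a = 0 \/ a = 1.
Proof. by case: a => [[|[|]]] //= H; [left|right]; apply: val_inj. Qed.

Variable m : nat.
Definition rowv (u : seq bool) : 'rV['F_2]_m := \row_(j < m) (nth false u j)%:R.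

Lemma natr_addb (a b : bool) : ((addb a b)%:R : 'F_2) = a%:R + b%:R.
Proof. by case: a; case: b; rewrite ?add0r ?addr0 //; apply: val_inj. Qed.

Lemma rowv_bx u v : rowv (bx u v) = rowv u + rowv v.
Proof. by apply/rowP => j; rewrite !mxE nth_bx natr_addb. Qed.

Lemma rowv_nil : rowv [::] = 0.
Proof. by apply/rowP => j; rewrite !mxE nth_nil. Qed.

Definition beq u v := ~~ has id (bx u v).

Lemma natr_inj2 (a b : bool) : (a%:R : 'F_2) = b%:R -> a = b.
Proof. by case: a; case: b => // /esym/eqP; rewrite oner_eq0. Qed.

Lemma rowv_eq u v : (size u <= m)%N -> (size v <= m)%N -> (rowv u == rowv v) = beq u v.
Proof.
move=> hu hv; apply/eqP/idP => [H | H].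
  apply/hasPn => b /(nthP false) [j hj <-]; rewrite nth_bx.
  case: (ltnP j m) => hjm.
    by move/rowP: H => /(_ (Ordinal hjm)); rewrite !mxE /= => /natr_inj2 ->; rewrite addbb.
  by rewrite !nth_default // (leq_trans _ hjm).
apply/rowP => j; rewrite !mxE; congr (_%:R).
have : nth false (bx u v) j = false.
  case: (ltnP j (size (bx u v))) => hj; last by rewrite nth_default.
  by apply/negbTE; apply: (hasPn H); apply: mem_nth.
by rewrite nth_bx; case: (nth false u j); case: (nth false v j).
Qed.

Fixpoint subsums (s : seq (seq bool)) : seq (seq bool) :=
  if s is v :: s' then let r := subsums s' in r ++ map (bx v) r else [:: [::]].

Lemma size_subsums s u : all (fun v => size v <= m)%N s -> u \in subsums s -> (size u <= m)%N.
Proof.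
elim: s u => [|v s IH] u /=; first by rewrite inE => _ /eqP->.
move=> /andP[hv hs]; rewrite mem_cat => /orP[/IH-> //| /mapP[w hw ->]].
by rewrite size_bx geq_max hv IH.
Qed.

Lemma span_sub (x : 'rV['F_2]_m) s :
  (x \in <<map rowv s>>%VS) = has (fun u => x == rowv u) (subsums s).
Proof.
elim: s x => [|v s IH] x /=; first by rewrite span_nil memv0 rowv_nil orbF.
rewrite span_cons has_cat has_map; apply/memv_addP/orP.
  move=> [u /vlineP[c ->] [w hw ->]]; move: hw; rewrite IH => /hasP[u' hu' /eqP->].
  case: (F2cases c) => ->; [left; rewrite scale0r add0r | right; rewrite scale1r].
    by apply/hasP; exists u'.
  by apply/hasP; exists u' => //=; rewrite rowv_bx.
move=> [/hasP[u hu /eqP->] | /hasP[u hu /eqP->]].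
  by exists 0; rewrite ?mem0v //; exists (rowv u); rewrite ?add0r // IH; apply/hasP; exists u.
exists (rowv v); first exact: memv_line.
by exists (rowv u); rewrite ?rowv_bx // IH; apply/hasP; exists u.
Qed.

Fixpoint cfree (s : seq (seq bool)) : bool :=
  if s is v :: s' then ~~ has (beq v) (subsums s') && cfree s' else true.

Lemma free_cfree s : all (fun v => size v <= m)%N s -> free (map rowv s) = cfree s.
Proof.
elim: s => [|v s IH] /=; first by rewrite nil_free.
move=> /andP[hv hs]; rewrite free_cons IH // span_sub; congr (~~ _ && _).
by apply: eq_in_has => u hu; rewrite rowv_eq // (size_subsums hs hu).
Qed.

End RowV.


Section U24.
Import GRing.Theory.
Local Open Scope ring_scope.
Variable T : finType.

Lemma span_setU1 m (f : T -> 'rV['F_2]_m) x (A : {set T}) :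
  (<<[seq f y | y <- enum (x |: A)]>> = <[f x]> + <<[seq f y | y <- enum A]>>)%VS.
Proof.
rewrite -span_cons; apply: eq_span => v; rewrite in_cons.
apply/mapP/orP => [[y]|[/eqP->|/mapP[y hy ->]]].
- rewrite mem_enum in_setU1 => /orP[/eqP-> ->|hy ->]; first by left.
  by right; apply: map_f; rewrite mem_enum.
- by exists x; rewrite ?mem_enum ?setU11.
- by exists y; rewrite // mem_enum in_setU1; rewrite mem_enum in hy; rewrite hy orbT.
Qed.

Lemma free_setU1 m (f : T -> 'rV['F_2]_m) x (A : {set T}) : x \notin A ->
  free [seq f y | y <- enum (x |: A)] -> f x \notin <<[seq f y | y <- enum A]>>%VS.
Proof.
move=> hx; have hp : perm_eq (enum (x |: A)) (x :: enum A).
  apply: uniq_perm; first exact: enum_uniq.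
    by rewrite /= mem_enum hx enum_uniq.
  by move=> y; rewrite in_cons !mem_enum in_setU1.
by rewrite (perm_free (perm_map f hp)) /= free_cons => /andP[].
Qed.

Lemma u24_nonbin (M : matroid T) (Z : {set T}) a b c d :
  c \notin a |: Z -> c \notin b |: Z -> d \notin a |: Z -> d \notin b |: Z -> c \notin d |: Z ->
  a |: (b |: Z) \in bases M -> c |: (a |: Z) \in bases M -> c |: (b |: Z) \in bases M ->
  d |: (a |: Z) \in bases M -> d |: (b |: Z) \in bases M -> c |: (d |: Z) \in bases M ->
  ~ binary M.
Proof.
move=> nca ncb nda ndb ncd bab bca bcb bda bdb bcd [m [f Hf]].
pose V (A : {set T}) := <<[seq f y | y <- enum A]>>%VS.
have fr : forall x (A : {set T}), x \notin A -> x |: A \in bases M -> f x \notin V A.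
  by move=> x A hx /Hf[_ hfree _]; apply: free_setU1.
have [_ _ hspan] := (Hf _).1 bab.
have key : forall x (A : {set T}), x |: A \in bases M -> f x \in V (a |: (b |: Z)).
  move=> x A hb; apply: (subvP hspan); apply: memv_span; apply: map_f.
  rewrite mem_enum; have [hs _ _] := (Hf _).1 hb; apply: (subsetP hs); exact: setU11.
have decomp : forall x, x \notin a |: Z -> x \notin b |: Z -> x |: (a |: Z) \in bases M ->
    x |: (b |: Z) \in bases M -> exists2 z, z \in V Z & f x = f a + f b + z.
  move=> x hxa hxb ba bb; have := key _ _ ba; rewrite /V !span_setU1.
  move=> /memv_addP[u /vlineP[al ->] [w /memv_addP[u' /vlineP[be ->] [z hz hw]] hx]].
  rewrite hw in hx.
  case: (F2cases al) => hal; subst al.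
    case/negP: (fr _ _ hxb bb); rewrite /V span_setU1 hx scale0r add0r.
    by apply: memv_add => //; apply/vlineP; exists be.
  case: (F2cases be) => hbe; subst be.
    case/negP: (fr _ _ hxa ba); rewrite /V span_setU1 hx scale0r add0r scale1r.
    by apply: memv_add => //; apply: memv_line.
  by exists z => //; rewrite hx !scale1r addrA.
have [zc hzc ec] := decomp c nca ncb bca bcb.
have [zd hzd ed] := decomp d nda ndb bda bdb.
case/negP: (fr _ _ ncd bcd); rewrite /V span_setU1.
have -> : f c = f d + (zc - zd) by rewrite ec ed -[in RHS]addrA [in RHS](addrC zd) subrK.
by apply: memv_add; [apply: memv_line | apply: rpredB].
Qed.

End U24.

Section Bits.
Variable n : nat.
Local Notation k := n.+1.
Local Notation T := 'I_n.+1.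
Implicit Types (A B C D X : {set T}) (x y b : seq bool).

Definition dec b : {set T} := [set i : T | nth false b i].
Definition enc A : seq bool := mkseq (fun i => inord i \in A) k.

Lemma size_enc A : size (enc A) = k. Proof. exact: size_mkseq. Qed.
Lemma nth_enc A (i : T) : nth false (enc A) i = (i \in A).
Proof. by rewrite nth_mkseq // inord_val. Qed.
Lemma nth_enc_nat A j : j < k -> nth false (enc A) j = (inord j \in A).
Proof. by move=> h; rewrite nth_mkseq. Qed.
Lemma dec_enc A : dec (enc A) = A.
Proof. by apply/setP=> i; rewrite inE nth_enc. Qed.
Lemma enc_dec b : size b = k -> enc (dec b) = b.
Proof.
move=> hs; apply: (@eq_from_nth _ false); rewrite ?size_enc ?hs // => j hj.
by rewrite nth_enc_nat // inE inordK.
Qed.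
Lemma enc_inj : injective enc.
Proof. by move=> A B h; rewrite -(dec_enc A) h dec_enc. Qed.
Lemma encP A b : size b = k -> (forall i : T, nth false b i = (i \in A)) -> enc A = b.
Proof.
move=> hs h; apply: (@eq_from_nth _ false); rewrite ?size_enc ?hs // => j hj.
by rewrite nth_enc_nat // -h inordK.
Qed.

Definition bor := map2b orb.
Definition band := map2b andb.
Definition bdiff := map2b (fun a c => a && ~~ c).
Definition sing j := mkseq (fun i => i == j) k.
Definition zeros := nseq k false.
Definition bcnt x := count id x.
Definition bnil x := ~~ has id x.
Definition bsub x y := bnil (bdiff x y).

Lemma enc_setU A B : enc (A :|: B) = bor (enc A) (enc B).
Proof.
apply: encP; first by rewrite size_map2b !size_enc.
by move=> i; rewrite nth_map2b ?size_enc // !nth_enc inE.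
Qed.
Lemma enc_setI A B : enc (A :&: B) = band (enc A) (enc B).
Proof.
apply: encP; first by rewrite size_map2b !size_enc.
by move=> i; rewrite nth_map2b ?size_enc // !nth_enc inE.
Qed.
Lemma enc_setD A B : enc (A :\: B) = bdiff (enc A) (enc B).
Proof.
apply: encP; first by rewrite size_map2b !size_enc.
by move=> i; rewrite nth_map2b ?size_enc // !nth_enc inE andbC.
Qed.
Lemma enc_set1 (x : T) : enc [set x] = sing x.
Proof. by apply: encP; rewrite ?size_mkseq // => i; rewrite nth_mkseq // inE. Qed.
Lemma enc_set0 : enc set0 = zeros.
Proof. by apply: encP; rewrite ?size_nseq // => i; rewrite nth_nseq ltn_ord inE. Qed.
Lemma enc_setT : enc setT = nseq k true.
Proof. by apply: encP; rewrite ?size_nseq // => i; rewrite nth_nseq ltn_ord inE. Qed.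

Lemma bnil_enc A : bnil (enc A) = (A == set0).
Proof.
rewrite /bnil; apply/hasPn/eqP => [H | ->].
  apply/setP => i; rewrite inE; apply/negbTE.
  have hi : val i < size (enc A) by rewrite size_enc ltn_ord.
  by have := H _ (mem_nth false hi); rewrite nth_enc.
by move=> x; rewrite enc_set0 mem_nseq => /andP[_ /eqP->].
Qed.

Lemma bsub_enc A B : bsub (enc A) (enc B) = (A \subset B).
Proof. by rewrite /bsub -enc_setD bnil_enc setD_eq0. Qed.

Lemma enum_perm A : perm_eq (map val (enum A)) [seq j <- iota 0 k | nth false (enc A) j].
Proof.
apply: uniq_perm; first by rewrite (map_inj_uniq val_inj) enum_uniq.
  by rewrite filter_uniq // iota_uniq.
move=> j; rewrite mem_filter mem_iota /=; apply/mapP/andP => [[x hx ->]|[hn hj]].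
  by rewrite nth_enc -mem_enum hx ltn_ord.
by exists (inord j); rewrite ?mem_enum -?nth_enc_nat ?inordK.
Qed.

Lemma bcnt_enc A : bcnt (enc A) = #|A|.
Proof.
rewrite cardE -(size_map val) (perm_size (enum_perm A)) size_filter.
rewrite /bcnt /enc /mkseq count_map; apply: eq_in_count => j.
by rewrite mem_iota /= => hj; rewrite nth_enc_nat.
Qed.

Lemma forall_iota (P : pred T) : [forall i, P i] = all (fun j => P (inord j)) (iota 0 k).
Proof.
apply/forallP/allP => H; first by move=> j _; apply: H.
by move=> i; have := H i; rewrite mem_iota ltn_ord inord_val; apply.
Qed.


Definition Rep (M : matroid T) E (L : seq (seq bool)) :=
  [/\ enc (ground M) = E, forall A, (A \in bases M) = (enc A \in L)
    & all (fun b => size b == k) L].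

Definition crank (L : seq (seq bool)) x := foldr maxn 0 [seq bcnt (band x b) | b <- L].

Lemma rank_rep M E L X : Rep M E L -> rank M X = crank L (enc X).
Proof.
case=> _ HB HL; rewrite /rank /crank; apply/eqP; rewrite eqn_leq; apply/andP; split.
  apply/bigmax_leqP => B hB; rewrite -bcnt_enc enc_setI.
  by apply: (leq_foldr_max (fun b => bcnt (band (enc X) b))); rewrite -HB.
apply: foldr_max_leq => b hb; have hs : size b = k by apply/eqP/(allP HL).
rewrite -(enc_dec hs) -enc_setI bcnt_enc.
by apply: leq_bigmax_cond; rewrite HB enc_dec.
Qed.

Lemma all_allb (P : pred (seq bool)) : all (fun b => size b == k) [seq x <- allb k | P x].
Proof. by apply/allP => x; rewrite mem_filter allbP => /andP[]. Qed.

Definition cminor E L c d :=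
  let E' := bdiff E (bor c d) in
  let r' x := crank L (bor x c) - crank L c in
  (E', [seq x <- allb k | [&& bsub x E', r' x == bcnt x & bcnt x == r' E']]).

Lemma minor_rep M E L C D : Rep M E L ->
  Rep (minor M C D) (cminor E L (enc C) (enc D)).1 (cminor E L (enc C) (enc D)).2.
Proof.
move=> R; case: (R) => hE HB HL; split.
- by rewrite /= -hE -enc_setU -enc_setD.
- move=> A; rewrite /= inE mem_filter allbP size_enc eqxx andbT.
  rewrite -hE -!enc_setU -enc_setD bsub_enc !bcnt_enc -!(rank_rep _ R).
  by rewrite -enc_setU -(rank_rep _ R).
- exact: all_allb.
Qed.

Definition cindep (L : seq (seq bool)) x := has (bsub x) L.

Lemma indep_rep M E L X : Rep M E L -> indep M X = cindep L (enc X).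
Proof.
case=> _ HB HL; apply/existsP/hasP => [[B /andP[hB hXB]] | [b hb hsub]].
  by exists (enc B); rewrite -?HB ?bsub_enc.
have hs : size b = k by apply/eqP/(allP HL).
by exists (dec b); rewrite HB enc_dec // hb /= -bsub_enc enc_dec.
Qed.

Definition ccircuit E L x := [&& bsub x E, ~~ cindep L x &
  all (fun j => nth false x j ==> cindep L (bdiff x (sing j))) (iota 0 k)].

Lemma circuit_rep M E L X : Rep M E L -> circuit M X = ccircuit E L (enc X).
Proof.
move=> R; case: (R) => hE _ _; rewrite /circuit /ccircuit -hE bsub_enc (indep_rep _ R).
rewrite forall_iota; congr [&& _, _ & _]; apply: eq_in_all => j.
rewrite mem_iota => /andP[_ hj].
by rewrite -nth_enc_nat // (indep_rep _ R) enc_setD enc_set1 inordK.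
Qed.

Definition cflat E L x := bsub x E && all (fun j => (nth false E j && ~~ nth false x j) ==>
   (crank L x < crank L (bor (sing j) x))) (iota 0 k).
Definition chyper E L x := cflat E L x && ((crank L x).+1 == crank L E).
Definition ccirchyp E L x := ccircuit E L x && chyper E L x.

Lemma flat_rep M E L X : Rep M E L -> flat M X = cflat E L (enc X).
Proof.
move=> R; case: (R) => hE _ _; rewrite /flat /cflat -hE bsub_enc.
rewrite forall_iota; congr (_ && _); apply: eq_in_all => j.
rewrite mem_iota => /andP[_ hj].
by rewrite inE -!nth_enc_nat // andbC !(rank_rep _ R) enc_setU enc_set1 inordK.
Qed.

Lemma cirhyp_rep M E L X : Rep M E L -> circuit_hyperplane M X = ccirchyp E L (enc X).
Proof.
move=> R; case: (R) => hE _ _.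
by rewrite /circuit_hyperplane /ccirchyp /hyperplane /chyper (circuit_rep _ R)
  (flat_rep _ R) !(rank_rep _ R) hE.
Qed.

Definition cism E (L : seq (seq bool)) := [&& L != [::], all (fun b => bsub b E) L &
  all (fun b1 => all (fun b2 => all (fun i => (nth false b1 i && ~~ nth false b2 i) ==>
     has (fun j => [&& nth false b2 j, ~~ nth false b1 j &
        bor (sing j) (bdiff b1 (sing i)) \in L]) (iota 0 k)) (iota 0 k)) L) L].

Lemma ism_rep M E L : Rep M E L -> cism E L -> is_matroid M.
Proof.
case=> hE HB HL /and3P[hne hsub hex]; split.
- have [b hb] : exists b, b \in L by case: (L) hne => // b ? _; exists b; rewrite inE eqxx.
  have hs : size b = k by apply/eqP/(allP HL).
  by apply/set0Pn; exists (dec b); rewrite HB enc_dec.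
- by move=> B; rewrite HB => /(allP hsub); rewrite -hE bsub_enc.
- move=> B1 B2; rewrite !HB => h1 h2 x /setDP[hx1 hx2].
  have hx : val x \in iota 0 k by rewrite mem_iota ltn_ord.
  have := allP (allP (allP hex _ h1) _ h2) _ hx.
  rewrite !nth_enc hx1 hx2 => /hasP[j]; rewrite mem_iota => /andP[_ hj].
  move=> /and3P[hj2 hj1 hin]; exists (inord j).
    by rewrite inE -!nth_enc_nat // hj2 hj1.
  by rewrite HB enc_setU enc_set1 enc_setD enc_set1 inordK.
Qed.

Definition gs (g : seq (seq bool)) x := [seq nth [::] g j | j <- iota 0 k & nth false x j].
Definition fg (g : seq (seq bool)) (i : T) := rowv k (nth [::] g i).

Lemma map_fg_perm g A : perm_eq (map (fg g) (enum A)) (map (rowv k) (gs g (enc A))).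
Proof.
rewrite /gs /fg.
have -> : map (fun i : T => rowv k (nth [::] g i)) (enum A) =
  map (rowv k) (map (nth [::] g) (map val (enum A))) by rewrite -!map_comp.
by apply: perm_map; apply: perm_map; apply: enum_perm.
Qed.

Definition cspan g s E := all (fun j => nth false E j ==>
  has (beq (nth [::] g j)) (subsums s)) (iota 0 k).

Definition cbincheck E (L : seq (seq bool)) g := all (fun x => (x \in L) ==
   [&& bsub x E, cfree (gs g x) & cspan g (gs g x) E]) (allb k).

Lemma binary_cert M E L g : Rep M E L -> all (fun v => size v <= k) g ->
  cbincheck E L g -> binary M.
Proof.
case=> hE HB HL hg hc; exists k, (fg g) => X.
have hgj : forall j, size (nth [::] g j) <= k.
  move=> j; case: (ltnP j (size g)) => [hj | hj]; last by rewrite nth_default.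
  exact: (allP hg _ (mem_nth [::] hj)).
have hgs : all (fun v => size v <= k) (gs g (enc X)).
  by apply/allP => v /mapP[j _ ->].
have := allP hc (enc X); rewrite allbP size_enc eqxx => /(_ isT) /eqP.
rewrite -HB => ->; rewrite -hE bsub_enc.
have e1 : free [seq fg g (z : T) | z <- enum X] = cfree (gs g (enc X)).
  by rewrite (perm_free (map_fg_perm g X)) free_cfree.
have e2 : (<< [seq fg g (z : T) | z <- enum (ground M)] >> <= << [seq fg g (z : T) | z <- enum X] >>)%VS
   = cspan g (gs g (enc X)) (enc (ground M)).
  rewrite (eq_span (perm_mem (map_fg_perm g X))).
  apply/span_subvP/allP => [H j hj | H v /mapP[x hx ->]].
    apply/implyP => hnE; move: hj; rewrite mem_iota /= => hj.
    have : fg g (inord j) \in [seq fg g (z : T) | z <- enum (ground M)].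
      by apply: map_f; rewrite mem_enum -nth_enc_nat.
    move/H; rewrite span_sub => /hasP[u hu /eqP e]; apply/hasP; exists u => //.
    by rewrite -(@rowv_eq k) ?(size_subsums hgs hu) // -e /fg inordK.
  have := H (val x); rewrite mem_iota ltn_ord nth_enc -mem_enum hx /= => /(_ isT).
  move=> /hasP[u hu e]; rewrite span_sub; apply/hasP; exists u => //.
  by rewrite /fg (@rowv_eq k) ?(size_subsums hgs hu).
rewrite e1 e2; split; first by move/and3P.
by move=> H; apply/and3P.
Qed.

Definition gen E (L : seq (seq bool)) : seq (seq bool) :=
  let B := head [::] L in
  mkseq (fun i => if nth false B i then sing i
                  else if nth false E i then
                    mkseq (fun j => nth false B j && (bor (sing i) (bdiff B (sing j)) \in L)) k
                  else [::]) k.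

Definition cbinary E L := let g := gen E L in
  all (fun v => size v <= k) g && cbincheck E L g.

Lemma cbinary_sound M E L : Rep M E L -> cbinary E L -> binary M.
Proof. by move=> R /andP[h1 h2]; apply: binary_cert R h1 h2. Qed.

Definition u24ok (L : seq (seq bool)) (z : seq bool) (a b c d : nat) :=
  let s (x y : nat) := bor (sing x) (bor (sing y) z) in
  let nin (x y : nat) := ~~ nth false (bor (sing y) z) x in
  [&& nin c a, nin c b, nin d a, nin d b & nin c d] &&
  ([&& s a b \in L, s c a \in L & s c b \in L] && [&& s d a \in L, s d b \in L & s c d \in L]).

Definition cu24 (L : seq (seq bool)) :=
  has (fun z => has (fun a => has (fun w : nat => has (fun c => has (fun d => u24ok L z a w c d)
    (iota 0 k)) (iota 0 k)) (iota 0 k)) (iota 0 k)) (allb k).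

Lemma cu24_sound M E L : Rep M E L -> cu24 L -> ~ binary M.
Proof.
case=> hE HB HL /hasP[z hz /hasP[a ha /hasP[b hb /hasP[c hc /hasP[d hd hok]]]]].
have hzs : size z = k by move: hz; rewrite allbP => /eqP.
move: ha hb hc hd; rewrite !mem_iota /= => ha hb hc hd.
have ES : forall x y : nat, x < k -> y < k ->
    enc (inord x |: (inord y |: dec z)) = bor (sing x) (bor (sing y) z).
  by move=> x y hx hy; rewrite !enc_setU !enc_set1 !inordK // enc_dec.
have NI : forall x y : nat, x < k -> y < k ->
    (inord x \notin (inord y |: dec z)) = ~~ nth false (bor (sing y) z) x.
  by move=> x y hx hy; rewrite -nth_enc_nat // enc_setU enc_set1 inordK // enc_dec.
move: hok; rewrite /u24ok -!NI // -!ES // -!HB.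
move=> /andP[/and5P[n1 n2 n3 n4 n5] /andP[/and3P[m1 m2 m3] /and3P[m4 m5 m6]]].
exact: (u24_nonbin n1 n2 n3 n4 n5 m1 m2 m3 m4 m5 m6).
Qed.

Definition cnorelax E (L : seq (seq bool)) := all (fun h =>
  let L' := [seq b <- L | b != h] in ccirchyp E L' h ==> cu24 L') L.

Lemma notR_sound M E L : Rep M E L -> cu24 L -> cnorelax E L -> ~ classR M.
Proof.
move=> R hu hc [|[N [H [_ hbin hch hM]]]]; first exact: cu24_sound R hu.
subst M; case: R => hE HB HL.
have RN : Rep N E [seq b <- L | b != enc H].
  split; first by rewrite -hE.
    move=> A; rewrite mem_filter -HB /= in_setU1 (inj_eq enc_inj).
    case: (eqVneq A H) => [->|hne] //=.
    apply/negbTE; have : ~~ indep N H by case/andP: hch => /and3P[].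
    by apply: contra => hb; apply/existsP; exists H; rewrite hb subxx.
  by apply/allP => b; rewrite mem_filter => /andP[_ /(allP HL)].
have hH : enc H \in L by rewrite -HB /= setU11.
have := allP hc _ hH; rewrite /= -(cirhyp_rep _ RN) hch /=.
by move/(cu24_sound RN).
Qed.

Definition checkZ E L := all (fun i => nth false E i ==>
  (cbinary (cminor E L zeros (sing i)).1 (cminor E L zeros (sing i)).2 ||
   cbinary (cminor E L (sing i) zeros).1 (cminor E L (sing i) zeros).2)) (iota 0 k).

Lemma checkZ_sound N E L : Rep N E L -> checkZ E L -> classZ N.
Proof.
move=> R hc e he; case: (R) => hE _ _.
have hi : val e \in iota 0 k by rewrite mem_iota ltn_ord.
have hEe : nth false E e by rewrite -hE nth_enc.
have := allP hc _ hi; rewrite hEe /= => /orP[h|h].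
  left; have := minor_rep set0 [set e] R; rewrite enc_set0 enc_set1 => R'.
  exact: cbinary_sound R' h.
right; have := minor_rep [set e] set0 R; rewrite enc_set0 enc_set1 => R'.
exact: cbinary_sound R' h.
Qed.

Definition checkR E L := cbinary E L || has (fun h =>
  let L' := [seq b <- L | b != h] in [&& ccirchyp E L' h, cbinary E L' & cism E L']) L.

Lemma checkR_sound N E L : Rep N E L -> checkR E L -> classR N.
Proof.
move=> R /orP[h|/hasP[h hh /and3P[hch hb hm]]]; first by left; exact: cbinary_sound R h.
right; case: (R) => hE HB HL.
have hs : size h = k by apply/eqP/(allP HL).
pose N' := Matroid (ground N) [set A | (A \in bases N) && (A != dec h)].
have RN' : Rep N' E [seq b <- L | b != h].
  split => //= [A|].
    by rewrite inE mem_filter HB andbC -(inj_eq enc_inj) enc_dec.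
  by apply/allP => b; rewrite mem_filter => /andP[_ /(allP HL)].
exists N', (dec h); split.
- exact: ism_rep RN' hm.
- exact: cbinary_sound RN' hb.
- by rewrite (cirhyp_rep _ RN') enc_dec.
have eqB : dec h |: [set A | (A \in bases N) && (A != dec h)] = bases N.
  apply/setP => A; rewrite in_setU1 inE.
  by case: eqVneq => [->|] /=; [rewrite HB enc_dec | rewrite andbT].
by rewrite /relax /= eqB; case: (N).
Qed.

Lemma allb_enc A : enc A \in allb k.
Proof. by rewrite allbP size_enc. Qed.

Definition chkall E L := all (fun c => all (fun d => bnil (band c d) ==> has id (bor c d) ==>
  (let m := cminor E L c d in checkZ m.1 m.2 && checkR m.1 m.2)) (allb k)) (allb k).

Lemma minors_sound M E L : Rep M E L -> chkall E L -> forall C D,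
  [disjoint C & D] -> C :|: D != set0 -> classZ (minor M C D) /\ classR (minor M C D).
Proof.
move=> R hc C D hdis hne.
have hh : has id (enc (C :|: D)) by move: hne; rewrite -bnil_enc /bnil negbK.
have := allP (allP hc _ (allb_enc C)) _ (allb_enc D).
rewrite -enc_setI -enc_setU bnil_enc (disjoint_setI0 hdis) eqxx hh /= => /andP[hz hr].
by split; [exact: checkZ_sound (minor_rep C D R) hz | exact: checkR_sound (minor_rep C D R) hr].
Qed.

Lemma exclZ M E L : Rep M E L -> cism E L ->
  has (fun i => [&& nth false E i, cu24 (cminor E L zeros (sing i)).2 &
                 cu24 (cminor E L (sing i) zeros).2]) (iota 0 k) ->
  chkall E L -> excluded_minor (@classZ _) M.
Proof.
move=> R hm hz ha; split; first exact: ism_rep R hm.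
  move=> hZ; case/hasP: hz => i; rewrite mem_iota /= => hi /and3P[hEi hd hc].
  case: (R) => hE _ _.
  have he : inord i \in ground M by rewrite -nth_enc_nat // hE.
  case: (hZ _ he) => hb.
    have := minor_rep set0 [set inord i] R; rewrite enc_set0 enc_set1 inordK // => R'.
    exact: cu24_sound R' hd hb.
  have := minor_rep [set inord i] set0 R; rewrite enc_set0 enc_set1 inordK // => R'.
  exact: cu24_sound R' hc hb.
by move=> C D _ _ h3 h4; case: (minors_sound R ha h3 h4).
Qed.

Lemma exclR M E L : Rep M E L -> cism E L -> cu24 L -> cnorelax E L -> chkall E L ->
  excluded_minor (@classR _) M.
Proof.
move=> R hm hu hn ha; split; first exact: ism_rep R hm.
  exact: notR_sound R hu hn.
by move=> C D _ _ h3 h4; case: (minors_sound R ha h3 h4).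
Qed.

(* fast (lazy) versions for computation *)
Fixpoint cfreef (s : seq (seq bool)) : bool :=
  if s is v :: s' then (if hasl (beq v) (subsums s') then false else cfreef s') else true.
Lemma cfreefE : cfreef = cfree.
Proof.
apply: functional_extensionality => s; elim: s => //= v s ->.
by rewrite !haslE; case: has.
Qed.

Definition cspanf g s E := alll (fun j => if nth false E j then
  hasl (beq (nth [::] g j)) (subsums s) else true) (iota 0 k).
Lemma cspanfE : cspanf = cspan.
Proof. by rewrite /cspanf /cspan !haslE !alllE. Qed.

Definition cbincheckf E (L : seq (seq bool)) g := alll (fun x => (x \in L) ==
   (if bsub x E then (if cfreef (gs g x) then cspanf g (gs g x) E else false) else false)) (allb k).
Lemma cbincheckfE : cbincheckf = cbincheck.
Proof. by rewrite /cbincheckf /cbincheck !alllE cfreefE cspanfE. Qed.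

Definition cbinaryf E L := let g := gen E L in
  if alll (fun v => size v <= k) g then cbincheckf E L g else false.
Lemma cbinaryfE : cbinaryf = cbinary.
Proof. by rewrite /cbinaryf /cbinary !alllE cbincheckfE. Qed.

Definition u24okf (L : seq (seq bool)) (z : seq bool) (a b c d : nat) :=
  let s (x y : nat) := bor (sing x) (bor (sing y) z) in
  let nin (x y : nat) := ~~ nth false (bor (sing y) z) x in
  if (if nin c a then (if nin c b then (if nin d a then (if nin d b then nin c d else false)
     else false) else false) else false)
  then (if (if s a b \in L then (if s c a \in L then s c b \in L else false) else false)
        then (if s d a \in L then (if s d b \in L then s c d \in L else false) else false)
        else false)
  else false.

Definition cu24f (L : seq (seq bool)) :=
  hasl (fun z => hasl (fun a => hasl (fun w : nat => hasl (fun c => hasl (fun d => u24okf L z a w c d)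
    (iota 0 k)) (iota 0 k)) (iota 0 k)) (iota 0 k)) (allb k).
Lemma cu24fE : cu24f = cu24.
Proof. by rewrite /cu24f /cu24 !haslE. Qed.

Definition cnorelaxf E (L : seq (seq bool)) := alll (fun h =>
  let L' := [seq b <- L | b != h] in if ccirchyp E L' h then cu24f L' else true) L.
Lemma cnorelaxfE : cnorelaxf = cnorelax.
Proof. by rewrite /cnorelaxf /cnorelax !alllE cu24fE. Qed.

Definition cismf E (L : seq (seq bool)) := if L != [::] then (if alll (fun b => bsub b E) L then
  alll (fun b1 => alll (fun b2 => alll (fun i => if (if nth false b1 i then ~~ nth false b2 i else false) then
     hasl (fun j => if nth false b2 j then (if ~~ nth false b1 j then
        bor (sing j) (bdiff b1 (sing i)) \in L else false) else false) (iota 0 k) else true)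
     (iota 0 k)) L) L else false) else false.
Lemma cismfE : cismf = cism.
Proof. by rewrite /cismf /cism !haslE !alllE. Qed.

Definition checkZf E L := alll (fun i => if nth false E i then
  (if cbinaryf (cminor E L zeros (sing i)).1 (cminor E L zeros (sing i)).2 then true else
   cbinaryf (cminor E L (sing i) zeros).1 (cminor E L (sing i) zeros).2) else true) (iota 0 k).
Lemma checkZfE : checkZf = checkZ.
Proof. by rewrite /checkZf /checkZ !alllE cbinaryfE. Qed.

Definition checkRf E L := if cbinaryf E L then true else hasl (fun h =>
  let L' := [seq b <- L | b != h] in
  if ccirchyp E L' h then (if cbinaryf E L' then cismf E L' else false) else false) L.
Lemma checkRfE : checkRf = checkR.
Proof. by rewrite /checkRf /checkR !haslE cbinaryfE cismfE. Qed.

Definition chkallf E L := alll (fun c => alll (fun d => if bnil (band c d) then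
  (if has id (bor c d) then
  (let m := cminor E L c d in if checkZf m.1 m.2 then checkRf m.1 m.2 else false) else true) else true)
  (allb k)) (allb k).
Lemma chkallfE : chkallf = chkall.
Proof. by rewrite /chkallf /chkall !alllE checkZfE checkRfE. Qed.

End Bits.

Definition E5 := nseq 5 true.
Definition L11 := [seq x <- allb 5 | (bcnt x == 3) && nth false x 4].
Definition L01 := [seq x <- allb 5 | (bcnt x == 2) && ~~ nth false x 4].
Definition t1 := [:: true; true; true; false; false; false].
Definition t2 := [:: false; false; false; true; true; true].
Definition L6 := [seq x <- allb 6 | [&& bcnt x == 3, x != t1 & x != t2]].
Definition E6 := nseq 6 true.

Lemma ordmax4 : (ord_max : 'I_5) = inord 4.
Proof. by apply/val_inj; rewrite /= inordK. Qed.

Lemma rep11 : Rep U24_U11 E5 L11.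
Proof.
split; first by rewrite /= enc_setT.
  move=> A; rewrite inE mem_filter allbP size_enc eqxx andbT bcnt_enc.
  by rewrite nth_enc_nat // -ordmax4.
exact: all_allb.
Qed.

Lemma rep01 : Rep U24_U01 E5 L01.
Proof.
split; first by rewrite /= enc_setT.
  move=> A; rewrite inE mem_filter allbP size_enc eqxx andbT bcnt_enc.
  by rewrite nth_enc_nat // -ordmax4.
exact: all_allb.
Qed.

Lemma enc_tri1 : enc tri1 = t1.
Proof. by apply: encP => // -[[|[|[|[|[|[|i]]]]]] hi]; rewrite inE. Qed.
Lemma enc_tri2 : enc tri2 = t2.
Proof. by apply: encP => // -[[|[|[|[|[|[|i]]]]]] hi]; rewrite inE. Qed.

Lemma rep6 : Rep R6 E6 L6.
Proof.
split; first by rewrite /= enc_setT.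
  move=> A; rewrite inE mem_filter allbP size_enc eqxx andbT bcnt_enc.
  by rewrite -enc_tri1 -enc_tri2 !(inj_eq (@enc_inj 5)).
exact: all_allb.
Qed.

Ltac vmc := vm_compute; reflexivity.

Lemma excl_all n (M : matroid 'I_n.+1) E L : Rep M E L -> cism n E L -> cu24 n L -> cnorelax n E L ->
  has (fun i => [&& nth false E i, cu24 n (cminor n E L (zeros n) (sing n i)).2 &
                 cu24 n (cminor n E L (sing n i) (zeros n)).2]) (iota 0 n.+1) ->
  chkall n E L -> excluded_minor (@classZ _) M /\ excluded_minor (@classR _) M.
Proof.
move=> R h1 h2 h3 h4 h5; split; [exact: exclZ R h1 h4 h5 | exact: exclR R h1 h2 h3 h5].
Qed.

Theorem lemma2p5 :
  (excluded_minor (@classZ _) U24_U11 /\ excluded_minor (@classR _) U24_U11) /\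
  (excluded_minor (@classZ _) U24_U01 /\ excluded_minor (@classR _) U24_U01) /\
  (excluded_minor (@classZ _) R6 /\ excluded_minor (@classR _) R6).
Proof.
split; [|split].
- apply: (excl_all rep11).
  + rewrite -cismfE; vmc.
  + rewrite -cu24fE; vmc.
  + rewrite -cnorelaxfE; vmc.
  + rewrite -cu24fE; vmc.
  + rewrite -chkallfE; vmc.
- apply: (excl_all rep01).
  + rewrite -cismfE; vmc.
  + rewrite -cu24fE; vmc.
  + rewrite -cnorelaxfE; vmc.
  + rewrite -cu24fE; vmc.
  + rewrite -chkallfE; vmc.
- apply: (excl_all rep6).
  + rewrite -cismfE; vmc.
  + rewrite -cu24fE; vmc.
  + rewrite -cnorelaxfE; vmc.
  + rewrite -cu24fE; vmc.
  + rewrite -chkallfE; vmc.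
Qed.
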